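(* Let $A$ be a convex $m\times n$ $(0,1)$-matrix in which every row sum and every column sum is at least $2$. Then $A$ permits an interchange resulting in another convex $m\times n$ $(0,1)$-matrix $B$ if and only if there are indices $1\le a<b\le m$ and $1\le c<d\le n$ such that, with $k=b-a+1$ and $l=d-c+1$: (i) the submatrix of $A$ in rows $a,\dots,b$ and columns $c,\dots,d$ equals $J^1_{k,l}$ or $J^2_{k,l}$; (ii) in rows $a$ and $b$, all entries of $A$ outside columns $c,\dots,d$ are $0$; (iii) in columns $c$ and $d$, all entries of $A$ outside rows $a,\dots,b$ are $0$.
   Context: A $(0,1)$-matrix is convex if in every row and every column the 1's occur consecutively. An interchange replaces a $2\times 2$ submatrix (in rows $i<i'$ and columns $j<j'$) equal to $\begin{bmatrix}1&0\\0&1\end{bmatrix}$ by $\begin{bmatrix}0&1\\1&0\end{bmatrix}$ or vice versa; it preserves row and column sums. $J_{k,l}$ is the $k\times l$ all-ones matrix; $J^1_{k,l}$ is obtained from $J_{k,l}$ by replacing the entries in positions $(1,1)$ and $(k,l)$ by $0$, and $J^2_{k,l}$ is obtained from $J_{k,l}$ by replacing the entries in positions $(1,l)$ and $(k,1)$ by $0$. *)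

(* Defs.v *)
(* (0,1)-matrices are 'M[bool]_(m, n) (true = 1, false = 0).
   Indices are 0-based ('I_m, 'I_n). *)
From mathcomp Require Import all_boot all_order all_algebra.
Set Implicit Arguments. Unset Strict Implicit. Unset Printing Implicit Defensive.

Definition convex_mx m n (A : 'M[bool]_(m, n)) : Prop :=
  (forall (i : 'I_m) (j1 j2 j3 : 'I_n),
      j1 <= j2 <= j3 -> A i j1 -> A i j3 -> A i j2) /\
  (forall (j : 'I_n) (i1 i2 i3 : 'I_m),
      i1 <= i2 <= i3 -> A i1 j -> A i3 j -> A i2 j).

Definition row_sum m n (A : 'M[bool]_(m, n)) (i : 'I_m) : nat :=
  #|[set j : 'I_n | A i j]|.
Definition col_sum m n (A : 'M[bool]_(m, n)) (j : 'I_n) : nat :=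
  #|[set i : 'I_m | A i j]|.

Definition mx_interchange m n (A B : 'M[bool]_(m, n)) : Prop :=
  exists (i i' : 'I_m) (j j' : 'I_n),
    [/\ i < i', j < j',
        (A i j && ~~ A i j' && ~~ A i' j && A i' j') ||
        (~~ A i j && A i j' && A i' j && ~~ A i' j') &
        forall (x : 'I_m) (y : 'I_n),
          B x y = if ((x == i) || (x == i')) && ((y == j) || (y == j'))
                  then ~~ A x y else A x y].

Definition block_J1 m n (A : 'M[bool]_(m, n)) (a b : 'I_m) (c d : 'I_n) : Prop :=
  forall (i : 'I_m) (j : 'I_n), a <= i <= b -> c <= j <= d ->
    A i j = ~~ (((i == a) && (j == c)) || ((i == b) && (j == d))).

Definition block_J2 m n (A : 'M[bool]_(m, n)) (a b : 'I_m) (c d : 'I_n) : Prop :=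
  forall (i : 'I_m) (j : 'I_n), a <= i <= b -> c <= j <= d ->
    A i j = ~~ (((i == a) && (j == d)) || ((i == b) && (j == c))).

(* Main.v *)
Require Import Defs.
From mathcomp Require Import all_boot all_order all_algebra.
From mathcomp Require Import zify.
Set Implicit Arguments. Unset Strict Implicit. Unset Printing Implicit Defensive.

Definition conv1 n (f : 'I_n -> bool) :=
  forall j1 j2 j3 : 'I_n, j1 <= j2 <= j3 -> f j1 -> f j3 -> f j2.

Lemma card2 n (h : 'I_n -> bool) (j0 : 'I_n) :
  2 <= #|[set y | h y]| -> exists y, (y != j0) && h y.
Proof.
move=> H; case: (pickP (fun y => (y != j0) && h y)) => [y Hy|H0]; first by exists y.
have: #|[set y | h y]| <= #|[set j0]|.
  apply: subset_leq_card; apply/subsetP => y; rewrite !inE => hy.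
  by move: (H0 y) => /=; rewrite hy andbT => /negbFE.
rewrite cards1; lia.
Qed.

Lemma core n (f g : 'I_n -> bool) (j j' : 'I_n) : conv1 f -> conv1 g -> j < j' ->
  f j -> ~~ f j' ->
  (forall y, g y = if (y == j) || (y == j') then ~~ f y else f y) ->
  (exists y, [&& y != j, y != j' & f y]) ->
  forall y, f y = (j <= y) && (y < j').
Proof.
move=> cf cg jj fj nfj hg [y0 /and3P[y0j y0j' fy0]].
have gj : g j = false by rewrite hg eqxx /= fj.
have gj' : g j' by rewrite hg eqxx orbT nfj.
have gf : forall y, y != j -> y != j' -> g y = f y
  by move=> y h1 h2; rewrite hg (negbTE h1) (negbTE h2).
have A1 : forall y, f y -> j <= y.
  move=> y fy; rewrite leqNgt; apply/negP => yj.
  have : g j.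
    apply: (cg y j j'); first lia.
      by rewrite gf // -(inj_eq val_inj) /=; lia.
    exact: gj'.
  by rewrite gj.
have A2 : forall y, f y -> y < j'.
  move=> y fy; rewrite ltnNge; apply/negP => jy.
  have : f j' by apply: (cf j j' y) => //; lia.
  by rewrite (negbTE nfj).
have y0a := A1 _ fy0; have y0b := A2 _ fy0.
have y0c : j < y0 by move: y0j; rewrite -(inj_eq val_inj) /=; lia.
move=> y; apply/idP/idP.
  by move=> fy; rewrite (A1 _ fy) (A2 _ fy).
move=> /andP[h1 h2]; case: (leqP y y0) => h3.
  by apply: (cf j y y0) => //; lia.
have gy : g y.
  apply: (cg y0 y j'); [lia | by rewrite gf | exact: gj'].
by rewrite -gf // -(inj_eq val_inj) /=; lia.
Qed.

Lemma flip n (h k : 'I_n -> bool) (j j' : 'I_n) : conv1 h -> conv1 k -> j < j' ->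
  (forall y, k y = if (y == j) || (y == j') then ~~ h y else h y) ->
  2 <= #|[set y | h y]| -> h j != h j' ->
  forall y, h y = if h j then (j <= y) && (y < j') else (j < y) && (y <= j').
Proof.
move=> ch ck jj hk card neq.
have hk' : forall y, h y = if (y == j) || (y == j') then ~~ k y else k y.
  by move=> y; rewrite hk; case: ((y == j) || (y == j')) => //=; rewrite negbK.
case hj: (h j).
  have hj' : h j' = false by move: neq; rewrite hj; case: (h j').
  move=> y /=; apply: (core ch ck jj) => //; first by rewrite hj'.
  have [y1 /andP[yj hy]] := card2 j card.
  exists y1; apply/and3P; split => //.
  by apply/eqP => E; move: hy; rewrite E hj'.
have hj' : h j' by move: neq; rewrite hj; case: (h j').
have C := @core n k h j j' ck ch jj.
have C' : forall y, k y = (j <= y) && (y < j').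
  apply: C => //; first by rewrite hk eqxx /= hj.
    by rewrite hk eqxx orbT hj'.
  have [y1 /andP[yj hy]] := card2 j' card.
  have yj2 : y1 != j by apply/eqP => E; move: hy; rewrite E hj.
  by exists y1; rewrite yj yj2 /= hk (negbTE yj) (negbTE yj2).
move=> y /=; rewrite hk' C' -!(inj_eq val_inj) /=; case: ifP; lia.
Qed.

Definition forms m n (A : 'M[bool]_(m,n)) (a b : 'I_m) (c d : 'I_n) (t : bool) : Prop :=
 [/\ forall y, A a y = if t then (c < y) && (y <= d) else (c <= y) && (y < d),
     forall y, A b y = if t then (c <= y) && (y < d) else (c < y) && (y <= d),
     forall x, A x c = if t then (a < x) && (x <= b) else (a <= x) && (x < b) &
     forall x, A x d = if t then (a <= x) && (x < b) else (a < x) && (x <= b)].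

Lemma fin m n (A : 'M[bool]_(m,n)) (a b : 'I_m) (c d : 'I_n) (t : bool) : convex_mx A -> a < b -> c < d ->
  forms A a b c d t ->
  exists (a b : 'I_m) (c d : 'I_n),
      [/\ a < b, c < d,
          block_J1 A a b c d \/ block_J2 A a b c d,
          (forall j : 'I_n, ~~ (c <= j <= d) -> A a j = false /\ A b j = false) &
          (forall i : 'I_m, ~~ (a <= i <= b) -> A i c = false /\ A i d = false)].
Proof.
move=> [Ar Ac] ab cd [Ra Rb Cc Cd].
exists a, b, c, d; split => //.
- destruct t; [left|right] => x y hx hy.
  + have [->|xa] := eqVneq x a; first by rewrite Ra /= -!(inj_eq val_inj) /=; lia.
    have [->|xb] := eqVneq x b; first by rewrite Rb /= -!(inj_eq val_inj) /=; lia.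
    have [->|yc] := eqVneq y c.
      by rewrite Cc /=; rewrite -!(inj_eq val_inj) /= in xa xb *; lia.
    have [->|yd] := eqVneq y d.
      by rewrite Cd /=; rewrite -!(inj_eq val_inj) /= in xa xb *; lia.
    rewrite -!(inj_eq val_inj) /= in xa xb yc yd *.
    have -> : A x y.
      apply: (Ar x c y d); [lia | rewrite Cc /=; lia | rewrite Cd /=; lia].
    lia.
  + have [->|xa] := eqVneq x a; first by rewrite Ra /= -!(inj_eq val_inj) /=; lia.
    have [->|xb] := eqVneq x b; first by rewrite Rb /= -!(inj_eq val_inj) /=; lia.
    have [->|yc] := eqVneq y c.
      by rewrite Cc /=; rewrite -!(inj_eq val_inj) /= in xa xb *; lia.
    have [->|yd] := eqVneq y d.
      by rewrite Cd /=; rewrite -!(inj_eq val_inj) /= in xa xb *; lia.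
    rewrite -!(inj_eq val_inj) /= in xa xb yc yd *.
    have -> : A x y.
      apply: (Ar x c y d); [lia | rewrite Cc /=; lia | rewrite Cd /=; lia].
    lia.
- move=> y hy; rewrite Ra Rb; destruct t; rewrite /=; split; lia.
- move=> x hx; rewrite Cc Cd; destruct t; rewrite /=; split; lia.
Qed.

Lemma bwd m n (A : 'M[bool]_(m,n)) (a b : 'I_m) (c d : 'I_n) (t : bool) : convex_mx A -> a < b -> c < d ->
  forms A a b c d t ->
  exists B : 'M[bool]_(m, n), mx_interchange A B /\ convex_mx B.
Proof.
move=> [Ar Ac] ab cd [Ra Rb Cc Cd].
pose B : 'M[bool]_(m,n) := (\matrix_(x, y)
  (if ((x == a) || (x == b)) && ((y == c) || (y == d)) then ~~ A x y else A x y))%R.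
have BE : forall x y, B x y =
  if ((x == a) || (x == b)) && ((y == c) || (y == d)) then ~~ A x y else A x y.
  by move=> x y; rewrite /B mxE.
have Ba : forall y, B a y = if t then (c <= y) && (y < d) else (c < y) && (y <= d).
  move=> y; rewrite BE eqxx /= Ra -!(inj_eq val_inj) /=; destruct t; case: ifP; lia.
have Bb : forall y, B b y = if t then (c < y) && (y <= d) else (c <= y) && (y < d).
  move=> y; rewrite BE eqxx orbT /= Rb -!(inj_eq val_inj) /=; destruct t; case: ifP; lia.
have Bc : forall x, B x c = if t then (a <= x) && (x < b) else (a < x) && (x <= b).
  move=> x; rewrite BE eqxx /= andbT Cc -!(inj_eq val_inj) /=; destruct t; case: ifP; lia.
have Bd : forall x, B x d = if t then (a < x) && (x <= b) else (a <= x) && (x < b).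
  move=> x; rewrite BE eqxx orbT andbT Cd -!(inj_eq val_inj) /=; destruct t; case: ifP; lia.
have Bo : forall x y, x != a -> x != b -> B x y = A x y.
  by move=> x y h1 h2; rewrite BE (negbTE h1) (negbTE h2).
have Bo' : forall x y, y != c -> y != d -> B x y = A x y.
  by move=> x y h1 h2; rewrite BE (negbTE h1) (negbTE h2) !andbF.
exists B; split.
  exists a, b, c, d; split => //.
  by rewrite !Ra !Rb; destruct t; rewrite /=; lia.
split.
  move=> x j1 j2 j3 hj.
  have [->|xa] := eqVneq x a; first by rewrite !Ba; destruct t; rewrite /=; lia.
  have [->|xb] := eqVneq x b; first by rewrite !Bb; destruct t; rewrite /=; lia.
  rewrite !Bo //; exact: Ar.
move=> y i1 i2 i3 hi.
have [->|yc] := eqVneq y c; first by rewrite !Bc; destruct t; rewrite /=; lia.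
have [->|yd] := eqVneq y d; first by rewrite !Bd; destruct t; rewrite /=; lia.
rewrite !Bo' //; exact: Ac.
Qed.

Lemma rhs_forms m n (A : 'M[bool]_(m,n)) (a b : 'I_m) (c d : 'I_n) : a < b -> c < d ->
  (forall j : 'I_n, ~~ (c <= j <= d) -> A a j = false /\ A b j = false) ->
  (forall i : 'I_m, ~~ (a <= i <= b) -> A i c = false /\ A i d = false) ->
  (block_J1 A a b c d -> forms A a b c d true) /\
  (block_J2 A a b c d -> forms A a b c d false).
Proof.
move=> ab cd h2 h3; split => J; split.
- move=> y; case: (boolP (c <= y <= d)) => hy.
    by rewrite J; try lia; rewrite -!(inj_eq val_inj) /=; lia.
  by rewrite (h2 y hy).1 /=; lia.
- move=> y; case: (boolP (c <= y <= d)) => hy.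
    by rewrite J; try lia; rewrite -!(inj_eq val_inj) /=; lia.
  by rewrite (h2 y hy).2 /=; lia.
- move=> x; case: (boolP (a <= x <= b)) => hx.
    by rewrite J; try lia; rewrite -!(inj_eq val_inj) /=; lia.
  by rewrite (h3 x hx).1 /=; lia.
- move=> x; case: (boolP (a <= x <= b)) => hx.
    by rewrite J; try lia; rewrite -!(inj_eq val_inj) /=; lia.
  by rewrite (h3 x hx).2 /=; lia.
- move=> y; case: (boolP (c <= y <= d)) => hy.
    by rewrite J; try lia; rewrite -!(inj_eq val_inj) /=; lia.
  by rewrite (h2 y hy).1 /=; lia.
- move=> y; case: (boolP (c <= y <= d)) => hy.
    by rewrite J; try lia; rewrite -!(inj_eq val_inj) /=; lia.
  by rewrite (h2 y hy).2 /=; lia.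
- move=> x; case: (boolP (a <= x <= b)) => hx.
    by rewrite J; try lia; rewrite -!(inj_eq val_inj) /=; lia.
  by rewrite (h3 x hx).1 /=; lia.
- move=> x; case: (boolP (a <= x <= b)) => hx.
    by rewrite J; try lia; rewrite -!(inj_eq val_inj) /=; lia.
  by rewrite (h3 x hx).2 /=; lia.
Qed.

Lemma fwd m n (A B : 'M[bool]_(m,n)) : convex_mx A ->
  (forall i : 'I_m, 2 <= row_sum A i) ->
  (forall j : 'I_n, 2 <= col_sum A j) ->
  mx_interchange A B -> convex_mx B ->
  exists (a b : 'I_m) (c d : 'I_n) (t : bool), [/\ a < b, c < d & forms A a b c d t].
Proof.
move=> [Ar Ac] rs cs [i [i' [j [j' [ii jj pat hB]]]]] [Br Bc].
have [e1 [e2 e3]] : A i j' = ~~ A i j /\ A i' j = ~~ A i j /\ A i' j' = A i j.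
  by move: pat; case: (A i j); case: (A i j'); case: (A i' j); case: (A i' j').
have Ri : forall y, A i y = if A i j then (j <= y) && (y < j') else (j < y) && (y <= j').
  apply: (@flip n (A i) (B i) j j' (Ar i) (Br i) jj).
  - by move=> y; rewrite hB eqxx.
  - exact: rs.
  - by rewrite e1; case: (A i j).
have Ri' : forall y, A i' y = if A i' j then (j <= y) && (y < j') else (j < y) && (y <= j').
  apply: (@flip n (A i') (B i') j j' (Ar i') (Br i') jj).
  - by move=> y; rewrite hB eqxx orbT.
  - exact: rs.
  - by rewrite e2 e3; case: (A i j).
have Cj : forall x, A x j = if A i j then (i <= x) && (x < i') else (i < x) && (x <= i').
  apply: (@flip m (fun x => A x j) (fun x => B x j) i i' (Ac j) (Bc j) ii).
  - by move=> x /=; rewrite hB eqxx /= andbT.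
  - exact: cs.
  - by rewrite /= e2; case: (A i j).
have Cj' : forall x, A x j' = if A i j' then (i <= x) && (x < i') else (i < x) && (x <= i').
  apply: (@flip m (fun x => A x j') (fun x => B x j') i i' (Ac j') (Bc j') ii).
  - by move=> x /=; rewrite hB eqxx orbT andbT.
  - exact: cs.
  - by rewrite /= e1 e3; case: (A i j).
exists i, i', j, j', (~~ A i j); split => //; split.
- by move=> y; rewrite (Ri y); case: (A i j).
- by move=> y; rewrite (Ri' y) e2; case: (A i j).
- by move=> x; rewrite (Cj x); case: (A i j).
- by move=> x; rewrite (Cj' x) e1; case: (A i j).
Qed.

Theorem mainTheorem8 (m n : nat) (A : 'M[bool]_(m, n)) :
  convex_mx A ->
  (forall i : 'I_m, 2 <= row_sum A i) ->
  (forall j : 'I_n, 2 <= col_sum A j) ->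
  ((exists B : 'M[bool]_(m, n), mx_interchange A B /\ convex_mx B) <->
   (exists (a b : 'I_m) (c d : 'I_n),
      [/\ a < b, c < d,
          block_J1 A a b c d \/ block_J2 A a b c d,
          (forall j : 'I_n, ~~ (c <= j <= d) -> A a j = false /\ A b j = false) &
          (forall i : 'I_m, ~~ (a <= i <= b) -> A i c = false /\ A i d = false)])).
Proof.
move=> cA rs cs; split.
  move=> [B [hI cB]].
  have [a [b [c [d [t [ab cd F]]]]]] := fwd cA rs cs hI cB.
  exact: fin cA ab cd F.
move=> [a [b [c [d [ab cd blk h2 h3]]]]].
have [F1 F2] := rhs_forms ab cd h2 h3.
case: blk => J; [exact: bwd cA ab cd (F1 J) | exact: bwd cA ab cd (F2 J)].
Qed.
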